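(* Let $k\ge2$. Consider the system of linear equations in the $k^2$ unknowns $(x_{ij})_{i,j=1}^k$: $\sum_{j=1}^k x_{ij}=p_i$ ($i=1,\dots,k$); $\sum_{i=1}^k x_{ij}=q_j$ ($j=1,\dots,k$); $x_{ii}=\min(p_i,q_i)$ ($i=1,\dots,k$); $x_{ii}+x_{ij}+x_{ji}+x_{jj}=\min(p_i+p_j,q_i+q_j)$ ($1\le i<j\le k$). The coefficient matrix of this system of $3k+\binom{k}{2}$ equations has rank $2k-1+\binom{k}{2}$.
   Context: $p=(p_1,\dots,p_k)$ and $q=(q_1,\dots,q_k)$ are probability vectors (nonnegative entries summing to 1); only the coefficient matrix (a 0/1 matrix) matters for the rank. *)

(* Defs.v *)
From HB Require Import structures.
From mathcomp Require Import all_boot all_order all_algebra.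
Set Implicit Arguments. Unset Strict Implicit. Unset Printing Implicit Defensive.
Import GRing.Theory Num.Theory.
Local Open Scope ring_scope.

(* Unknowns x_{ij} (i,j : 'I_k) are the coordinates of a row vector of
   length k*k, via mxvec: (mxvec A) (mxvec_index i j) = A i j.
   Each equation is a row given by the k x k matrix of coefficients of the x_{ij}. *)

Definition rowsum_eq (R : nzRingType) (k : nat) (i : 'I_k) : 'rV[R]_(k * k) :=
  mxvec (\matrix_(a < k, b < k) ((a == i)%:R : R)).
Definition colsum_eq (R : nzRingType) (k : nat) (j : 'I_k) : 'rV[R]_(k * k) :=
  mxvec (\matrix_(a < k, b < k) ((b == j)%:R : R)).
Definition diag_eq (R : nzRingType) (k : nat) (i : 'I_k) : 'rV[R]_(k * k) :=
  mxvec (\matrix_(a < k, b < k) (((a == i) && (b == i))%:R : R)).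
(* x_{ii} + x_{ij} + x_{ji} + x_{jj} = min(p_i+p_j, q_i+q_j), for i < j (0-based) *)
Definition pair_eq (R : nzRingType) (k : nat) (ij : nat * nat) : 'rV[R]_(k * k) :=
  mxvec (\matrix_(a < k, b < k)
    (((((a : nat) == ij.1) || ((a : nat) == ij.2)) &&
      (((b : nat) == ij.1) || ((b : nat) == ij.2)))%:R : R)).

Definition pairs (k : nat) : seq (nat * nat) :=
  [seq (i, j) | i <- iota 0 k, j <- [seq j <- iota 0 k | (i < j)%N]].

Definition coef_mx (R : nzRingType) (k : nat)
  : 'M[R]_(k + (k + (k + size (pairs k))), k * k) :=
  col_mx (\matrix_(i < k) rowsum_eq R i)
    (col_mx (\matrix_(j < k) colsum_eq R j)
      (col_mx (\matrix_(i < k) diag_eq R i)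
        (\matrix_(r < size (pairs k)) pair_eq R k (nth (0%N, 0%N) (pairs k) r)))).

(* Main.v *)
Require Import Defs.
From HB Require Import structures.
From mathcomp Require Import all_boot all_order all_algebra.
From mathcomp Require Import zify ring.
Import GRing.Theory Num.Theory.
Lemma mem_pairs k p : (p \in pairs k) = (p.1 < p.2) && (p.2 < k).
Proof.
case: p => i j /=; apply/idP/idP.
  move/allpairsPdep=> [x [y [hx]]]; rewrite mem_filter !mem_iota /= => /andP[hxy hy] [-> ->].
  by rewrite hxy.
move=> /andP[hij hj]; apply/allpairsPdep; exists i, j; split => //.
  by rewrite mem_iota /=; apply: ltn_trans hj.
by rewrite mem_filter hij mem_iota.
Qed.

Lemma uniq_pairs k : uniq (pairs k).
Proof.
apply: allpairs_uniq_dep.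
- exact: iota_uniq.
- by move=> x _; apply: filter_uniq; apply: iota_uniq.
- by move=> [x y] [x' y'] _ _ /= [-> ->].
Qed.

Lemma count_gt i k : count (fun j => i < j) (iota 0 k) = k - i.+1.
Proof.
elim: k => [|k IH] //.
rewrite -[k.+1]addn1 iotaD count_cat IH /= add0n addn0.
by case: (ltnP i k) => h /=; lia.
Qed.

Lemma size_pairs k : size (pairs k) = 'C(k, 2).
Proof.
rewrite /pairs size_allpairs_dep.
rewrite (eq_map (g := fun i => k - i.+1)); last by move=> i /=; rewrite size_filter count_gt.
rewrite sumnE big_map -bin2_sum.
rewrite big_nat_rev /=.
by rewrite /index_iota subn0; apply: eq_bigr => i _; rewrite add0n.
Qed.
Local Open Scope ring_scope.
Section Main.
Variable R : fieldType.
Variable n : nat.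
Local Notation k := n.+1.
Local Notation P := (size (pairs k)).
Local Notation nthp r := (nth (0%N, 0%N) (pairs k) r).

Definition Smat (p : nat * nat) : 'M[R]_k :=
  \matrix_(a < k, b < k) (((((a : nat), (b : nat)) == p) || (((b : nat), (a : nat)) == p))%:R).

Lemma nthp_lt (r : 'I_P) : ((nthp r).1 < (nthp r).2)%N && ((nthp r).2 < k)%N.
Proof. by rewrite -mem_pairs mem_nth. Qed.

Lemma sumS (a b : 'I_k) : (a < b)%N -> exists r0 : 'I_P, nthp r0 = (a : nat, b : nat) /\
  forall F : 'I_P -> R, \sum_r F r * Smat (nthp r) a b = F r0 /\
                       \sum_r F r * Smat (nthp r) b a = F r0.
Proof.
move=> hab.
have hin : ((a : nat), (b : nat)) \in pairs k by rewrite mem_pairs /= hab ltn_ord.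
have hi : (index ((a : nat), (b : nat)) (pairs k) < P)%N by rewrite index_mem.
pose r0 := Ordinal hi.
have hr0 : nthp r0 = (a : nat, b : nat) by rewrite nth_index.
have other : forall r : 'I_P, r != r0 -> Smat (nthp r) a b = 0 /\ Smat (nthp r) b a = 0.
  move=> r hr; rewrite !mxE.
  have h1 : ((a : nat, b : nat) == nthp r) = false.
    apply/negP => /eqP e; move: hr; rewrite -(inj_eq val_inj).
    have -> : val r0 = index (a : nat, b : nat) (pairs k) by [].
    by rewrite e (index_uniq _ (ltn_ord r) (uniq_pairs k)) eqxx.
  have h2 : ((b : nat, a : nat) == nthp r) = false.
    apply/negP => /eqP e; move: (nthp_lt r); rewrite -e.
    by rewrite ltnNge (ltnW hab).
  by rewrite h1 h2.
exists r0; split; first exact: hr0. move=> F.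
rewrite !(bigD1 r0 (erefl true)) !mxE hr0 !eqxx orbT !mulr1.
have z1 : \sum_(r | r != r0) F r * Smat (nthp r) a b = 0.
  by apply: big1 => r hr; have [-> _] := other r hr; rewrite mulr0.
have z2 : \sum_(r | r != r0) F r * Smat (nthp r) b a = 0.
  by apply: big1 => r hr; have [_ ->] := other r hr; rewrite mulr0.
by rewrite z1 z2; split; exact: addr0.
Qed.


Lemma sumS_diag (a : 'I_k) (F : 'I_P -> R) : \sum_r F r * Smat (nthp r) a a = 0.
Proof.
apply: big1 => r _; rewrite mxE orbb.
case: eqP => [e|]; last by rewrite mulr0.
by move: (nthp_lt r); rewrite -e /= ltnn.
Qed.

Local Notation w c := (widen_ord (leqnSn n) c).

Definition Svec p : 'rV[R]_(k * k) := mxvec (Smat p).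
Definition B1 : 'M[R]_(k, k * k) := \matrix_(i < k) diag_eq R i.
Definition B2 : 'M[R]_(P, k * k) := \matrix_(r < P) Svec (nthp r).
Definition B3 : 'M[R]_(n, k * k) := \matrix_(c < n) rowsum_eq R (w c).
Definition B := col_mx B1 (col_mx B2 B3).

Lemma entry_mul (x1 : 'rV[R]_k) (x2 : 'rV[R]_P) (x3 : 'rV[R]_n) (a b : 'I_k) :
  (row_mx x1 (row_mx x2 x3) *m B) 0 (mxvec_index a b) =
  \sum_i x1 0 i * ((a == i) && (b == i))%:R +
  (\sum_r x2 0 r * Smat (nthp r) a b + \sum_c x3 0 c * (a == w c)%:R).
Proof.
rewrite /B !mul_row_col !mxE.
congr (_ + (_ + _)); apply: eq_bigr => i _; by rewrite !mxE mxvecE mxE.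
Qed.

Lemma sum_diag (f : 'I_k -> R) a b :
  \sum_i f i * ((a == i) && (b == i))%:R = if a == b then f a else 0.
Proof.
rewrite (bigD1 a) //= big1 => [|i hi]; last first.
  by rewrite eq_sym (negbTE hi) mulr0.
rewrite eqxx /=; case: (a =P b) => [<-|/eqP hab]; first by rewrite eqxx mulr1 addr0.
by rewrite eq_sym (negbTE hab) mulr0 addr0.
Qed.

Lemma sum_w (f : 'I_n -> R) c0 : \sum_c f c * (w c0 == w c)%:R = f c0.
Proof.
rewrite (bigD1 c0) //= big1 => [|c hc]; first by rewrite eqxx mulr1 addr0.
suff -> : (w c0 == w c) = false by rewrite mulr0.
by apply/negP => /eqP/(congr1 val) /= /val_inj e; rewrite e eqxx in hc.
Qed.

Lemma sum_wmax (f : 'I_n -> R) : \sum_c f c * (ord_max == w c)%:R = 0.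
Proof.
apply: big1 => c _; suff -> : (ord_max == w c) = false by rewrite mulr0.
by apply/negP => /eqP/(congr1 val) /= e; move: (ltn_ord c); rewrite -e ltnn.
Qed.

Lemma ord_max_neq (c : 'I_n) : (ord_max == w c :> 'I_k) = false.
Proof. by apply/negP => /eqP/(congr1 val) /= e; move: (ltn_ord c); rewrite -e ltnn. Qed.

Lemma nthp_inj (r r0 : 'I_P) : nthp r0 = nthp r -> r0 = r.
Proof.
move=> e; apply: val_inj; change ((r0 : nat) = r).
by rewrite -(index_uniq (0%N, 0%N) (ltn_ord r0) (uniq_pairs k)) e
  (index_uniq (0%N, 0%N) (ltn_ord r) (uniq_pairs k)).
Qed.

Lemma indep (x : 'rV[R]_(k + (P + n))) : x *m B = 0 -> x = 0.
Proof.
rewrite -[x]hsubmxK -[rsubmx x]hsubmxK.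
move: (lsubmx x) (lsubmx (rsubmx x)) (rsubmx (rsubmx x)) => x1 x2 x3 H.
have E : forall a b, \sum_i x1 0 i * ((a == i) && (b == i))%:R +
  (\sum_r x2 0 r * Smat (nthp r) a b + \sum_c x3 0 c * (a == w c)%:R) = 0.
  by move=> a b; rewrite -entry_mul H mxE.
have h3 : x3 = 0.
  apply/rowP => c; rewrite mxE.
  have [r0 [_ hS]] := sumS (w c) ord_max (ltn_ord c).
  have e1 := E ord_max (w c).
  rewrite sum_diag (hS _).2 sum_wmax ord_max_neq add0r addr0 in e1.
  have e2 := E (w c) ord_max.
  rewrite sum_diag (hS _).1 sum_w eq_sym ord_max_neq add0r e1 add0r in e2.
  exact: e2.
have h2 : x2 = 0.
  apply/rowP => r; rewrite mxE.
  have /andP[h12 h2k] := nthp_lt r.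
  have h1k : ((nthp r).1 < k)%N by apply: ltn_trans h2k.
  have hlt : (@inord n (nthp r).1 < @inord n (nthp r).2)%N by rewrite !inordK.
  have [r0 [hr0 hS]] := sumS _ _ hlt.
  have er : r0 = r.
    by apply: nthp_inj; rewrite hr0 !inordK // -surjective_pairing.
  have e := E (inord (nthp r).1) (inord (nthp r).2).
  rewrite sum_diag (hS _).1 er h3 in e.
  have hne : (inord (nthp r).1 == inord (nthp r).2 :> 'I_k) = false.
    apply/negP => /eqP/(congr1 val) => /=; rewrite !inordK // => ee.
    by move: h12; rewrite ee ltnn.
  have z : \sum_c (0 : 'rV[R]_n) 0 c * (inord (nthp r).1 == w c :> 'I_k)%:R = 0.
    by apply: big1 => c _; rewrite mxE mul0r.
  by rewrite hne z add0r addr0 in e.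
have h1 : x1 = 0.
  apply/rowP => i; rewrite mxE.
  have e := E i i.
  have z : \sum_c (0 : 'rV[R]_n) 0 c * (i == w c :> 'I_k)%:R = 0.
    by apply: big1 => c _; rewrite mxE mul0r.
  by rewrite sum_diag eqxx sumS_diag h3 z !addr0 in e.
by rewrite h1 h2 h3 !row_mx0.
Qed.

Lemma rankB : \rank B = (k + (P + n))%N.
Proof.
apply/eqP; change (row_free B); rewrite -kermx_eq0.
apply/eqP/row_matrixP => i; rewrite row0; apply: indep; apply/eqP.
by rewrite -sub_kermx; exact: row_sub.
Qed.

Lemma vecP (u v : 'rV[R]_(k * k)) :
  (forall a b : 'I_k, u 0 (mxvec_index a b) = v 0 (mxvec_index a b)) -> u = v.
Proof. by move=> h; apply/rowP => j; case/mxvec_indexP: j => a b; exact: h. Qed.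

Lemma bool_id (a b p1 p2 : nat) : p1 != p2 ->
  ((((a == p1) || (a == p2)) && ((b == p1) || (b == p2)))%:R : R) =
  ((a == p1) && (b == p1))%:R + ((a == p2) && (b == p2))%:R +
  (((a, b) == (p1, p2)) || ((b, a) == (p1, p2)))%:R.
Proof.
move=> hp; rewrite !xpair_eqE.
have hp' : p2 != p1 by rewrite eq_sym.
have [->|h1] := eqVneq a p1; have [->|h2] := eqVneq b p1;
  rewrite ?eqxx ?(negbTE hp) ?(negbTE hp') ?(negbTE h1) ?(negbTE h2) /=;
  try (have [->|h3] := eqVneq b p2);
  try (have [->|h4] := eqVneq a p2);
  rewrite ?eqxx ?(negbTE hp) ?(negbTE hp') ?(negbTE h1) ?(negbTE h2)
    ?(negbTE h3) ?(negbTE h4) /= ?addr0 ?add0r //.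
all: by rewrite ?orbF ?andbT ?andbF /= ?add0r ?addr0.
Qed.

Lemma eq_inord (a : 'I_k) p : (p < k)%N -> (a == inord p) = (a == p :> nat).
Proof. by move=> h; rewrite -(inj_eq val_inj) /= inordK. Qed.

Lemma pair_decomp_gen (p1 p2 : nat) : (p1 < p2)%N -> (p2 < k)%N ->
  Defs.pair_eq R k (p1, p2) = diag_eq R (inord p1) + diag_eq R (inord p2) + Svec (p1, p2).
Proof.
move=> h12 h2k; have h1k : (p1 < k)%N by apply: ltn_trans h2k.
apply: vecP => a b; rewrite !mxE !mxvecE !mxE !eq_inord //=.
by apply: bool_id; rewrite neq_ltn h12.
Qed.

Lemma pair_decomp (r : 'I_P) :
  Defs.pair_eq R k (nthp r) = diag_eq R (inord (nthp r).1) + diag_eq R (inord (nthp r).2) + Svec (nthp r).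
Proof.
have /andP[h12 h2k] := nthp_lt r.
move: h12 h2k; case: (nthp r) => p1 p2 /= h12 h2k; exact: pair_decomp_gen.
Qed.

Lemma subL m1 m2 (X : 'M[R]_(m1, k * k)) (Y : 'M[R]_(m2, k * k)) : (X <= col_mx X Y)%MS.
Proof. rewrite -addsmxE; exact: addsmxSl. Qed.
Lemma subR m1 m2 (X : 'M[R]_(m1, k * k)) (Y : 'M[R]_(m2, k * k)) : (Y <= col_mx X Y)%MS.
Proof. rewrite -addsmxE; exact: addsmxSr. Qed.

Local Notation A := (coef_mx R k).

Lemma rs_sub i : (rowsum_eq R i <= A)%MS.
Proof.
rewrite -(rowK (fun i => rowsum_eq R i) i); apply: submx_trans (row_sub _ _) _.
exact: subL.
Qed.
Lemma cs_sub i : (colsum_eq R i <= A)%MS.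
Proof.
rewrite -(rowK (fun i => colsum_eq R i) i); apply: submx_trans (row_sub _ _) _.
apply: (submx_trans _ (subR _ _ _ _)); exact: subL.
Qed.
Lemma dg_sub i : (diag_eq R i <= A)%MS.
Proof.
rewrite -(rowK (fun i => diag_eq R i) i); apply: submx_trans (row_sub _ _) _.
apply: (submx_trans _ (subR _ _ _ _)); apply: (submx_trans _ (subR _ _ _ _)); exact: subL.
Qed.
Lemma pr_sub (r : 'I_P) : (Defs.pair_eq R k (nthp r) <= A)%MS.
Proof.
rewrite -(rowK (fun r : 'I_P => Defs.pair_eq R k (nthp r)) r); apply: submx_trans (row_sub _ _) _.
apply: (submx_trans _ (subR _ _ _ _)); apply: (submx_trans _ (subR _ _ _ _)); exact: subR.
Qed.

Lemma subBA : (B <= A)%MS.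
Proof.
rewrite /B !col_mx_sub; apply/and3P; split.
- by apply/row_subP => i; rewrite rowK; exact: dg_sub.
- apply/row_subP => r; rewrite rowK.
  have -> : Svec (nthp r) = Defs.pair_eq R k (nthp r) + (-1) *: diag_eq R (inord (nthp r).1)
     + (-1) *: diag_eq R (inord (nthp r).2).
    rewrite pair_decomp; apply: vecP => a b; rewrite !mxE; ring.
  by rewrite !addmx_sub ?scalemx_sub ?dg_sub ?pr_sub.
- by apply/row_subP => c; rewrite rowK; exact: rs_sub.
Qed.

Lemma ord_cases (i : 'I_k) : (exists c : 'I_n, i = w c) \/ i = ord_max.
Proof.
case: (ltnP i n) => h; first by left; exists (Ordinal h); apply: val_inj.
by right; apply: val_inj => /=; apply/eqP; rewrite eqn_leq h -ltnS ltn_ord.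
Qed.

Lemma comb_sub (y1 : 'rV[R]_k) (y2 : 'rV[R]_P) (y3 : 'rV[R]_n) : (row_mx y1 (row_mx y2 y3) *m B <= B)%MS.
Proof. exact: submxMl. Qed.

Lemma sumS_eval (F : 'I_P -> R) (a b : 'I_k) :
  (a < b)%N \/ (b < a)%N -> exists r0 : 'I_P, (nthp r0 = (a : nat, b : nat) \/ nthp r0 = (b : nat, a : nat)) /\
     \sum_r F r * Smat (nthp r) a b = F r0.
Proof.
case=> h.
  by have [r0 [e hS]] := sumS _ _ h; exists r0; split; [left | exact: (hS F).1].
by have [r0 [e hS]] := sumS _ _ h; exists r0; split; [right | exact: (hS F).2].
Qed.

Lemma rs_max : (rowsum_eq R (ord_max : 'I_k) <= B)%MS.
Proof.
have -> : rowsum_eq R (ord_max : 'I_k) =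
  row_mx (const_mx 1) (row_mx (const_mx 1) (const_mx (-1))) *m B.
  apply: vecP => a b; rewrite entry_mul mxvecE mxE sum_diag !mxE.
  have hw : \sum_c (const_mx (-1) : 'rV[R]_n) 0 c * (a == w c)%:R =
            if (a == ord_max) then 0 else -1.
    case: (ord_cases a) => [[c ->]|->]; last by rewrite sum_wmax eqxx.
    by rewrite sum_w mxE eq_sym ord_max_neq.
  rewrite hw.
  case: (ltngtP a b) => h.
  - have [r0 [_ ->]] := sumS_eval (fun r => (const_mx 1 : 'rV[R]_P) 0 r) _ _ (or_introl h).
    have -> : (a == b) = false by apply/negP => /eqP e; rewrite e ltnn in h.
    have -> : (a == ord_max) = false.
      by apply/negP => /eqP e; move: h; rewrite e /= ltnNge -ltnS ltn_ord.
    by rewrite mxE /= add0r subrr.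
  - have [r0 [_ ->]] := sumS_eval (fun r => (const_mx 1 : 'rV[R]_P) 0 r) _ _ (or_intror h).
    have -> : (a == b) = false by apply/negP => /eqP e; rewrite e ltnn in h.
    by rewrite mxE; case: (a == ord_max) => /=; rewrite add0r ?addr0 ?subrr.
  - have e : a = b by apply: val_inj.
    rewrite -e sumS_diag eqxx.
    by case: (a == ord_max) => /=; rewrite add0r ?addr0 ?subrr.
by apply: comb_sub.
Qed.

Lemma dB i : (diag_eq R i <= B)%MS.
Proof.
rewrite -(rowK (fun i => diag_eq R i) i); apply: submx_trans (row_sub _ _) _.
exact: subL.
Qed.
Lemma sB (r : 'I_P) : (Svec (nthp r) <= B)%MS.
Proof.
rewrite -(rowK (fun r : 'I_P => Svec (nthp r)) r); apply: submx_trans (row_sub _ _) _.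
apply: (submx_trans _ (subR _ _ _ _)); exact: subL.
Qed.
Lemma rB (c : 'I_n) : (rowsum_eq R (w c) <= B)%MS.
Proof.
rewrite -(rowK (fun c : 'I_n => rowsum_eq R (w c)) c); apply: submx_trans (row_sub _ _) _.
apply: (submx_trans _ (subR _ _ _ _)); exact: subR.
Qed.
Lemma rs_B i : (rowsum_eq R i <= B)%MS.
Proof. by case: (ord_cases i) => [[c ->]|->]; [exact: rB | exact: rs_max]. Qed.

Lemma cs_B j : (colsum_eq R j <= B)%MS.
Proof.
pose y1 : 'rV[R]_k := \row_i ((i == j)%:R + (i == j)%:R).
pose y2 : 'rV[R]_P := \row_r ((inord (nthp r).1 == j) || (inord (nthp r).2 == j))%:R.
have e : colsum_eq R j + rowsum_eq R j = row_mx y1 (row_mx y2 0) *m B.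
  apply: vecP => a b; rewrite entry_mul !mxE !mxvecE !mxE sum_diag !mxE.
  have -> : \sum_c (0 : 'rV[R]_n) 0 c * (a == w c)%:R = 0.
    by apply: big1 => c _; rewrite mxE mul0r.
  case: (ltngtP a b) => h.
  - have [r0 [[er|er] ->]] := sumS_eval (fun r => y2 0 r) _ _ (or_introl h);
      last by move: (nthp_lt r0); rewrite er /= ltnNge (ltnW h).
    have -> : (a == b) = false by apply/negP => /eqP e; rewrite e ltnn in h.
    rewrite mxE er /= !inord_val addr0 add0r.
    have hab : (b == a) = false by apply/negP => /eqP e; rewrite e ltnn in h.
    by case: (eqVneq a j) => [<-|ne]; rewrite ?eqxx ?hab ?(negbTE ne) /= ?addr0 ?add0r.
  - have [r0 [[er|er] ->]] := sumS_eval (fun r => y2 0 r) _ _ (or_intror h);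
      first by move: (nthp_lt r0); rewrite er /= ltnNge (ltnW h).
    have -> : (a == b) = false by apply/negP => /eqP e; rewrite e ltnn in h.
    rewrite mxE er /= !inord_val addr0 add0r.
    have hab : (a == b) = false by apply/negP => /eqP e; rewrite e ltnn in h.
    by case: (eqVneq b j) => [<-|ne]; rewrite ?eqxx ?hab ?(negbTE ne) /= ?addr0 ?add0r ?orbT ?orbF.
  - have e : a = b by apply: val_inj.
    by rewrite -e sumS_diag eqxx !addr0.
have -> : colsum_eq R j = row_mx y1 (row_mx y2 0) *m B + (-1) *: rowsum_eq R j.
  by rewrite -e scaleN1r addrK.
by apply: addmx_sub; [exact: comb_sub | apply: scalemx_sub; exact: rs_B].
Qed.

Lemma subAB : (A <= B)%MS.
Proof.
rewrite /coef_mx !col_mx_sub; apply/and4P; split.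
- by apply/row_subP => i; rewrite rowK; exact: rs_B.
- by apply/row_subP => i; rewrite rowK; exact: cs_B.
- by apply/row_subP => i; rewrite rowK; exact: dB.
- apply/row_subP => r; rewrite rowK pair_decomp.
  by rewrite !addmx_sub ?dB ?sB.
Qed.

Lemma rankA : \rank A = (k + (P + n))%N.
Proof. by rewrite -rankB; apply/anti_leq; rewrite !mxrankS ?subAB ?subBA. Qed.

End Main.

Theorem theoremS1 (R : numFieldType) (k : nat) (hk : (2 <= k)%N) :
  size (pairs k) = 'C(k, 2) /\
  \rank (coef_mx R k) = (2 * k - 1 + 'C(k, 2))%N.
Proof.
split; first exact: size_pairs.
case: k hk => [|n] // hn.
rewrite (rankA R n) size_pairs.
lia.
Qed.
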